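(* Let $A,B$ be $P$-operators on the same probability space $\Omega$. Then $d_M(A,B)\le 3\|A-B\|_{\infty\to1}^{1/2}$.
   Context: A $P$-operator on a probability space $\Omega$ is a linear $A:L^\infty(\Omega)\to L^1(\Omega)$, $v\mapsto vA$, with $\|A\|_{\infty\to1}:=\sup_v\|vA\|_1/\|v\|_\infty<\infty$. $\mathcal{S}_k(A)$ is the set of joint distributions on $\mathbb{R}^{2k}$ of $(v_1,\dots,v_k,v_1A,\dots,v_kA)$ over measurable $v_i:\Omega\to[-1,1]$. $d_{\rm LP}(\eta_1,\eta_2)=\inf\{\varepsilon>0:\eta_1(U)\le\eta_2(U^\varepsilon)+\varepsilon,\ \eta_2(U)\le\eta_1(U^\varepsilon)+\varepsilon\text{ for all Borel }U\}$ ($U^\varepsilon$ the open $\varepsilon$-neighborhood), $d_H$ the corresponding Hausdorff distance between sets of measures, and $d_M(A,B)=\sum_{k\ge1}2^{-k}d_H(\mathcal{S}_k(A),\mathcal{S}_k(B))$. *)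

(* Defs.v *)
From HB Require Import structures.
From mathcomp Require Import all_boot all_order all_algebra.
From mathcomp Require Import all_classical all_reals all_analysis.
Set Implicit Arguments. Unset Strict Implicit. Unset Printing Implicit Defensive.
Import Order.TTheory GRing.Theory Num.Theory.
Import numFieldNormedType.Exports.
Local Open Scope classical_set_scope.
Local Open Scope ring_scope.

Section POperators.
Context (d : measure_display) (T : measurableType d) (R : realType)
        (P : probability T R).

(* Representatives of elements of L^oo(Omega): bounded measurable functions. *)
Definition bdd_mfun (v : T -> R) : Prop :=
  measurable_fun setT v /\ exists M : R, forall x, `|v x| <= M.

Definition unit_mfun (v : T -> R) : Prop :=
  measurable_fun setT v /\ forall x, `|v x| <= 1.

Definition opnorm (A : (T -> R) -> (T -> R)) : \bar R :=
  ereal_sup [set (\int[P]_x (`|A v x|)%:E)%E | v in unit_mfun].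

(* A P-operator: a linear map L^oo(Omega) -> L^1(Omega) with finite
   (oo -> 1)-norm, given on representatives: it respects a.e. equality,
   is linear up to a.e. equality, and sends L^oo into L^1. *)
Definition P_operator (A : (T -> R) -> (T -> R)) : Prop :=
  [/\ (forall v, bdd_mfun v -> P.-integrable setT (EFin \o A v)),
      (forall v w, bdd_mfun v -> bdd_mfun w ->
         \forall x \ae P, A (fun y => v y + w y) x = A v x + A w x),
      (forall (a : R) v, bdd_mfun v ->
         \forall x \ae P, A (fun y => a * v y) x = a * A v x),
      (forall v w, bdd_mfun v -> bdd_mfun w ->
         (\forall x \ae P, v x = w x) -> \forall x \ae P, A v x = A w x) &
      (opnorm A < +oo)%E].

Definition joint_map (k : nat) (A : (T -> R) -> (T -> R))
    (v : 'I_k -> T -> R) : T -> 'rV[R]_(k + k) :=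
  fun x => row_mx (\row_(i < k) v i x) (\row_(i < k) A (v i) x).

Definition law (n : nat) (f : T -> 'rV[R]_n) : set 'rV[R]_n -> \bar R :=
  fun U => P (f @^-1` U).

Definition S_k (k : nat) (A : (T -> R) -> (T -> R)) : set (set 'rV[R]_(k + k) -> \bar R) :=
  [set law (joint_map A v) | v in [set v : 'I_k -> T -> R | forall i, unit_mfun (v i)]].

End POperators.
Arguments S_k {d T R} P k A.

Section LP.
Context (R : realType).

Definition edist (n : nat) (x y : 'rV[R]_n) : R :=
  Num.sqrt (\sum_(i < n) (x ord0 i - y ord0 i) ^+ 2).

Definition nbhd_eps (n : nat) (U : set 'rV[R]_n) (e : R) : set 'rV[R]_n :=
  [set y | exists2 x, U x & edist x y < e].

Definition borel_set (n : nat) (U : set 'rV[R]_n) : Prop := <<s open >> U.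

Definition dLP (n : nat) (eta1 eta2 : set 'rV[R]_n -> \bar R) : \bar R :=
  ereal_inf [set e%:E | e in [set e : R | 0 < e /\
     forall U, borel_set U ->
       (eta1 U <= eta2 (nbhd_eps U e) + e%:E)%E /\
       (eta2 U <= eta1 (nbhd_eps U e) + e%:E)%E]].

Definition dH (n : nat) (S1 S2 : set (set 'rV[R]_n -> \bar R)) : \bar R :=
  Order.max
    (ereal_sup [set ereal_inf [set dLP eta mu | mu in S2] | eta in S1])
    (ereal_sup [set ereal_inf [set dLP eta mu | eta in S1] | mu in S2]).

End LP.

Definition dM (d : measure_display) (T : measurableType d) (R : realType)
    (P : probability T R) (A B : (T -> R) -> (T -> R)) : \bar R :=
  (\sum_(1 <= k <oo) ((2 ^- k : R)%:E * dH (S_k P k A) (S_k P k B)))%E.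

(* Main.v *)
Require Import Defs.
From HB Require Import structures.
From mathcomp Require Import all_boot all_order all_algebra.
From mathcomp Require Import all_classical all_reals all_analysis.
Import Order.TTheory GRing.Theory Num.Theory.
Import numFieldNormedType.Exports.
Local Open Scope classical_set_scope.
Local Open Scope ring_scope.
From mathcomp Require Import ring lra.
Set Implicit Arguments. Unset Strict Implicit. Unset Printing Implicit Defensive.
Section Meas.
Context (d : measure_display) (T : measurableType d) (R : realType).

Lemma open_ball_rV n (U : set 'rV[R]_n) (x : 'rV[R]_n) : open U -> U x ->
  exists2 e : R, 0 < e & forall y : 'rV[R]_n, (forall j, `|x ord0 j - y ord0 j| < e) -> U y.
Proof.
move=> oU Ux; have := oU x Ux; move=> /nbhs_ballP [e e0 eU].
exists e => // y hy; apply: eU; split => // i j.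
by rewrite (ord1 i) /ball /=; apply: hy.
Qed.

Lemma open_preimage_meas n (F : T -> 'rV[R]_n) :
  (forall j, measurable_fun setT (fun t => F t ord0 j)) ->
  forall U, open U -> measurable (F @^-1` U).
Proof.
move=> mF U oU.
pose box (q : 'rV[rat]_n) (r : nat) : set 'rV[R]_n :=
  [set y | forall j, `|y ord0 j - ratr (q ord0 j)| < r.+1%:R^-1].
pose G (m : nat) : set T := match unpickle m with
  | Some (q, r) => if `[< box q r `<=` U >] then F @^-1` box q r else set0
  | None => set0 end.
have mbox q r : measurable (F @^-1` box q r).
  have -> : F @^-1` box q r = \bigcap_(j in setT) 
     (setT `&` (fun t => F t ord0 j) @^-1` 
        `]ratr (q ord0 j) - r.+1%:R^-1, ratr (q ord0 j) + r.+1%:R^-1[).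
    apply/seteqP; split => t; rewrite /box /=.
      move=> h j _; split; first by [].
      rewrite /= in_itv /=; idtac.
      by have := h j; rewrite ltr_distl.
    move=> h j; have := h j I; rewrite /= in_itv /= => -[_ hj].
    by rewrite ltr_distl.
  apply: fin_bigcap_measurable; first exact: finite_finset.
  by move=> j _; apply: mF => //; exact: measurable_itv.
suff -> : F @^-1` U = \bigcup_m G m.
  apply: bigcupT_measurable => m; rewrite /G.
  case: (unpickle m) => [[q r]|//].
  by case: ifP.
apply/seteqP; split => t /=.
- move=> Ut.
  have [e e0 eU] := @open_ball_rV _ _ _ oU Ut.
  have [r hr] : exists r : nat, 0 + r.+1%:R^-1 < e / 2 :> R.
    by apply: ltr_add_invr; rewrite divr_gt0.
  rewrite add0r in hr.
  have hq : forall j, exists q : rat, `|F t ord0 j - ratr q| < r.+1%:R^-1.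
    move=> j.
    have hd := @dense_rat R `](F t ord0 j - r.+1%:R^-1), (F t ord0 j + r.+1%:R^-1)[%classic.
    have [|x [Ox [qq _ qx]]] := hd _ (itv_open _ _).
      exists (F t ord0 j); rewrite /= in_itv /= ltrDl ltrBlDr ltrDl invr_gt0 ltr0n //.
    move: Ox; rewrite /= in_itv /= -qx => /andP[h1 h2].
    by exists qq; rewrite distrC ltr_distl h1 h2.
  have [qf hqf] := choice hq.
  pose q : 'rV[rat]_n := \row_j qf j.
  exists (pickle (q, r)) => //.
  rewrite /G pickleK.
  have bU : box q r `<=` U.
    move=> y /= hy; apply: eU => j.
    have h1 := hy j; have h2 := hqf j; rewrite mxE in h1.
    move: h1 h2 hr; rewrite !ltr_distl => /andP[a1 b1] /andP[a2 b2] hr.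
    set eps := r.+1%:R^-1 in a1 b1 a2 b2 hr *; apply/andP; split; lra.
  rewrite (_ : `[< _ >] = true); last exact/asboolP.
  by move=> /= j; rewrite mxE.
- move=> [m _]; rewrite /G; case: (unpickle m) => [[q r]|//].
  by case: ifP => // /asboolP bU /bU.
Qed.

Lemma borel_preimage_meas n (F : T -> 'rV[R]_n) :
  (forall j, measurable_fun setT (fun t => F t ord0 j)) ->
  forall U, borel_set U -> measurable (F @^-1` U).
Proof.
move=> mF U BU; apply: (BU [set V | measurable (F @^-1` V)]); split; [split|].
- by rewrite /= preimage_set0.
- move=> V mV /=; rewrite setTD -preimage_setC; exact: measurableC.
- by move=> V mV /=; rewrite preimage_bigcup; exact: bigcupT_measurable.
- by move=> V oV; exact: open_preimage_meas.
Qed.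
End Meas.

Section Aux.
Context (R : realType).

Lemma sqrt_sum_le (I : Type) (s : seq I) (a : I -> R) :
  Num.sqrt (\sum_(i <- s) a i ^+ 2) <= \sum_(i <- s) `|a i|.
Proof.
have h : \sum_(i <- s) a i ^+ 2 <= (\sum_(i <- s) `|a i|) ^+ 2.
  elim: s => [|x s ih]; first by rewrite !big_nil expr0n.
  rewrite !big_cons.
  have hs : 0 <= \sum_(i <- s) `|a i| by apply: sumr_ge0.
  have hx := normr_ge0 (a x).
  rewrite -(real_normK (num_real (a x))).
  move: ih hs hx; set Q := \sum_(i <- s) _; set S := \sum_(i <- s) _; set u := `|a x|.
  move=> ih hs hx; nra.
apply: (le_trans (ler_wsqrtr h)); rewrite sqrtr_sqr ger0_norm //.
by apply: sumr_ge0.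
Qed.

Lemma edist_cont n (x : 'rV[R]_n) : continuous (fun y : 'rV[R]_n => Defs.edist x y).
Proof.
move=> y.
have hs (s : seq 'I_n) : {for y, continuous (fun z : 'rV[R]_n =>
      \sum_(i <- s) (x ord0 i - z ord0 i) ^+ 2)}.
  elim: s => [|i s ih].
    rewrite (_ : (fun _ => _) = fun _ => 0); last by apply: funext => z; rewrite big_nil.
    exact: cst_continuous.
  rewrite (_ : (fun _ => _) = (fun z : 'rV[R]_n => (x ord0 i - z ord0 i) ^+ 2) +
      (fun z => \sum_(j <- s) (x ord0 j - z ord0 j) ^+ 2)); last first.
    by apply: funext => z; rewrite big_cons.
  apply: continuousD => //.
  rewrite (_ : (fun _ => _) = (fun z : 'rV[R]_n => x ord0 i - z ord0 i) \*
     (fun z => x ord0 i - z ord0 i)); last by apply: funext => z; rewrite expr2.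
  have hc : {for y, continuous (fun z : 'rV[R]_n => x ord0 i - z ord0 i)}.
    rewrite (_ : (fun _ => _) = (fun _ : 'rV[R]_n => x ord0 i) - (fun z : 'rV[R]_n => z ord0 i)) //.
    apply: continuousB; first exact: cst_continuous.
    exact: coord_continuous.
  by apply: continuousM.
exact: (@continuous_comp _ _ _ _ Num.sqrt y (hs (index_enum 'I_n)) (@sqrt_continuous R _)).
Qed.

Lemma nbhd_eps_open n (U : set 'rV[R]_n) e : open (nbhd_eps U e).
Proof.
have -> : nbhd_eps U e = \bigcup_(x in U) ((fun y => Defs.edist x y) @^-1` [set r | r < e]).
  by apply/seteqP; split => y /= [x Ux h]; exists x.
apply: bigcup_open => x _; apply: open_comp; last exact: open_lt.
by move=> y _; exact: edist_cont.
Qed.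

Lemma nbhd_eps_borel n (U : set 'rV[R]_n) e : borel_set (nbhd_eps U e).
Proof. by apply: sub_sigma_algebra; exact: nbhd_eps_open. Qed.

End Aux.

Section Main.
Context (d : measure_display) (T : measurableType d) (R : realType)
  (P : probability T R).

Lemma unit_bdd (v : T -> R) : unit_mfun v -> bdd_mfun v.
Proof. by move=> [mv hv]; split => //; exists 1. Qed.

Lemma Pop_meas (A : (T -> R) -> (T -> R)) v :
  P_operator P A -> unit_mfun v -> measurable_fun setT (A v).
Proof.
move=> [hi _ _ _ _] hv.
by have /measurable_int/measurable_realfun.measurable_EFinP := hi v (unit_bdd hv).
Qed.

Lemma unit0 : unit_mfun (fun _ : T => 0 : R).
Proof. by split; [exact: measurable_cst | move=> x; rewrite normr0]. Qed.

Lemma opnorm_ub (A : (T -> R) -> (T -> R)) v : unit_mfun v ->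
  (\int[P]_x (`|A v x|)%:E <= opnorm P A)%E.
Proof. by move=> hv; apply: ereal_sup_ubound; exists v. Qed.

Lemma opnorm_ge0 (A : (T -> R) -> (T -> R)) : (0 <= opnorm P A)%E.
Proof.
apply: le_trans (opnorm_ub A unit0).
by apply: integral_ge0 => x _; rewrite lee_fin.
Qed.

Lemma opnorm_fin (A B : (T -> R) -> (T -> R)) : P_operator P A -> P_operator P B ->
  opnorm P (fun v x => A v x - B v x) \is a fin_num.
Proof.
move=> PA PB; rewrite ge0_fin_numE; last exact: opnorm_ge0.
have [_ _ _ _ hA] := PA; have [_ _ _ _ hB] := PB.
apply: (@le_lt_trans _ _ (opnorm P A + opnorm P B)%E); last exact: lte_add_pinfty.
apply: ge_ereal_sup => _ [v hv <-].
have mA := Pop_meas PA hv; have mB := Pop_meas PB hv.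
apply: (@le_trans _ _ (\int[P]_x ((`|A v x|)%:E + (`|B v x|)%:E))%E).
  apply: ge0_le_integral => //.
  - apply/measurable_realfun.measurable_EFinP; apply: measurableT_comp => //.
    exact: measurable_realfun.measurable_funB.
  - by apply: emeasurable_funD; apply/measurable_realfun.measurable_EFinP; apply: measurableT_comp.
  - by move=> x _; rewrite -EFinD lee_fin ler_normB.
rewrite ge0_integralD //.
- by apply: leeD; apply: opnorm_ub.
- by apply/measurable_realfun.measurable_EFinP; apply: measurableT_comp.
- by apply/measurable_realfun.measurable_EFinP; apply: measurableT_comp.
Qed.

Lemma LP_half n (f g : T -> 'rV[R]_n) (D : T -> R) (e : R) :
  (forall j, measurable_fun setT (fun t => f t ord0 j)) ->
  (forall j, measurable_fun setT (fun t => g t ord0 j)) ->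
  measurable_fun setT D ->
  (forall t, Defs.edist (f t) (g t) <= D t) ->
  0 < e ->
  (e%:E * P (setT `&` [set t | (e%:E <= `|(D t)%:E|)%E]) <= (e * e)%:E)%E ->
  forall U, borel_set U -> (law P f U <= law P g (nbhd_eps U e) + e%:E)%E.
Proof.
move=> mf mg mD hfg e0 hbad U BU.
set bad := setT `&` _ in hbad.
have mbad : measurable bad.
  apply: (@measurable_realfun.emeasurable_fun_c_infty _ _ _ setT (fun t => (`|D t|)%:E)) => //.
  by apply/measurable_realfun.measurable_EFinP; apply: measurableT_comp.
have mfU : measurable (f @^-1` U) by exact: borel_preimage_meas.
have mgU : measurable (g @^-1` nbhd_eps U e).
  by apply: borel_preimage_meas => //; exact: nbhd_eps_borel.
have hb : (P bad <= e%:E)%E.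
  by rewrite -(@lee_pmul2l _ e%:E) // ?lte_fin // -EFinM.
have sub : f @^-1` U `<=` g @^-1` nbhd_eps U e `|` bad.
  move=> t /= Ut; case: (ltP (Defs.edist (f t) (g t)) e) => h.
    by left; exists (f t).
  right; split => //=; rewrite lee_fin.
  exact: le_trans h (le_trans (hfg t) (ler_norm _)).
rewrite /law; apply: (@le_trans _ _ (P (g @^-1` nbhd_eps U e `|` bad))).
  by apply: le_measure => //; rewrite inE //; exact: measurableU.
by apply: le_trans (measureU2 _ mgU mbad) _; apply: leeD.
Qed.
End Main.

Section Main2.
Context (d : measure_display) (T : measurableType d) (R : realType)
  (P : probability T R).

Lemma joint_coord_meas k (A : (T -> R) -> (T -> R)) (v : 'I_k -> T -> R) :
  (forall i, measurable_fun setT (v i)) -> (forall i, measurable_fun setT (A (v i))) ->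
  forall j, measurable_fun setT (fun t => joint_map A v t ord0 j).
Proof.
move=> hv hA j; rewrite /joint_map.
case: (split_ordP j) => i ->.
  by rewrite (_ : (fun t => _) = v i) //; apply: funext => t; rewrite row_mxEl mxE.
by rewrite (_ : (fun t => _) = A (v i)) //; apply: funext => t; rewrite row_mxEr mxE.
Qed.

Lemma joint_edist k (A B : (T -> R) -> (T -> R)) (v : 'I_k -> T -> R) t :
  Defs.edist (joint_map A v t) (joint_map B v t) <=
  \sum_(i < k) `|A (v i) t - B (v i) t|.
Proof.
rewrite /Defs.edist big_split_ord /=.
rewrite big1 ?add0r; last by move=> i _; rewrite /joint_map !row_mxEl !mxE subrr expr2 mul0r.
rewrite (eq_bigr (fun i => (A (v i) t - B (v i) t) ^+ 2)); last first.
  by move=> i _; rewrite /joint_map !row_mxEr !mxE.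
exact: sqrt_sum_le.
Qed.

Lemma joint_edist' k (A B : (T -> R) -> (T -> R)) (v : 'I_k -> T -> R) t :
  Defs.edist (joint_map B v t) (joint_map A v t) <=
  \sum_(i < k) `|A (v i) t - B (v i) t|.
Proof.
apply: le_trans (joint_edist B A v t) _.
by apply: ler_sum => i _; rewrite distrC.
Qed.

Lemma hbad_lem k (A B : (T -> R) -> (T -> R)) (v : 'I_k -> T -> R) :
  (forall i, unit_mfun (v i)) -> P_operator P A -> P_operator P B ->
  forall e, 0 < e ->
  (e%:E * P (setT `&` [set t | (e%:E <= `|(\sum_(i < k) `|A (v i) t - B (v i) t|)%:E|)%E])
    <= (fine (opnorm P (fun v x => A v x - B v x)) *+ k)%:E)%E.
Proof.
move=> hv PA PB e e0.
set D := fun t => \sum_(i < k) `|A (v i) t - B (v i) t|.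
have mi i : measurable_fun setT (fun t => `|A (v i) t - B (v i) t|).
  apply: measurableT_comp => //; apply: measurable_realfun.measurable_funB;
    [exact: Pop_meas PA (hv i) | exact: Pop_meas PB (hv i)].
have mD : measurable_fun setT D by apply: measurable_sum.
have H := @le_integral_comp_abse _ _ _ P setT measurableT (EFin \o D) e id
  (@measurable_id _ _ setT) (fun r h => h) (fun x y _ _ h => h)
  (proj2 (measurable_realfun.measurable_EFinP _ _) mD) e0.
apply: le_trans; first exact: H.
rewrite (eq_integral (fun x => \sum_(i < k) (`|A (v i) x - B (v i) x|)%:E)); last first.
  by move=> x _; rewrite /= ger0_norm ?sumEFin //; apply: sumr_ge0.
rewrite ge0_integral_sum //; last first.
  by move=> i; apply/measurable_realfun.measurable_EFinP.
have hd i : (\int[P]_x (`|A (v i) x - B (v i) x|)%:E <=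
    (fine (opnorm P (fun v x => A v x - B v x)))%:E)%E.
  rewrite fineK; last exact: opnorm_fin.
  exact: (opnorm_ub P (fun v x => A v x - B v x) (hv i)).
apply: (@le_trans _ _ (\sum_(i < k) (fine (opnorm P (fun v x => A v x - B v x)))%:E)%E).
  by apply: lee_sum => i _; exact: hd.
by rewrite sumEFin lee_fin sumr_const card_ord.
Qed.

Lemma LP_bound k (A B : (T -> R) -> (T -> R)) (v : 'I_k -> T -> R) :
  (forall i, unit_mfun (v i)) -> P_operator P A -> P_operator P B -> (0 < k)%N ->
  (dLP (law P (joint_map A v)) (law P (joint_map B v)) <=
    (k%:R * Num.sqrt (fine (opnorm P (fun v x => A v x - B v x))))%:E)%E.
Proof.
move=> hv PA PB k0.
set δ := fine _.
have δ0 : 0 <= δ by apply: fine_ge0; exact: opnorm_ge0.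
set D := fun t => \sum_(i < k) `|A (v i) t - B (v i) t|.
have mi i : measurable_fun setT (fun t => `|A (v i) t - B (v i) t|).
  apply: measurableT_comp => //; apply: measurable_realfun.measurable_funB;
    [exact: Pop_meas PA (hv i) | exact: Pop_meas PB (hv i)].
have mD : measurable_fun setT D by apply: measurable_sum.
have mfA := joint_coord_meas (fun i => (hv i).1) (fun i => Pop_meas PA (hv i)).
have mfB := joint_coord_meas (fun i => (hv i).1) (fun i => Pop_meas PB (hv i)).
apply/lee_addgt0Pr => eps eps0.
set s := Num.sqrt δ.
have s0 : 0 <= s by apply: sqrtr_ge0.
have K1 : 1 <= k%:R :> R by rewrite ler1n.
set K := k%:R in K1 *.
set e := K * s + eps.
have Ks0 : 0 <= K * s by apply: mulr_ge0 => //; lra.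
have e0 : 0 < e by rewrite /e; lra.
have ke : δ *+ k <= e * e.
  have hs : δ = s ^+ 2 by rewrite sqr_sqrtr.
  rewrite -mulr_natl -/K hs /e.
  have h1 : 0 <= (K - 1) * (K * s ^+ 2).
    by apply: mulr_ge0; [lra | apply: mulr_ge0; [lra | apply: sqr_ge0]].
  have h2 : 0 <= K * s * eps by apply: mulr_ge0 => //; lra.
  nra.
have hbad : (e%:E * P (setT `&` [set t | (e%:E <= `|(D t)%:E|)%E]) <= (e * e)%:E)%E.
  apply: le_trans (hbad_lem hv PA PB e0) _.
  by rewrite lee_fin.
rewrite -EFinD; apply: ereal_inf_lbound; exists e => //; split => // U BU; split.
- exact: (LP_half mfA mfB mD (fun t => joint_edist A B v t) e0 hbad BU).
- exact: (LP_half mfB mfA mD (fun t => joint_edist' A B v t) e0 hbad BU).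
Qed.

Lemma dLP_ge0 n (eta mu : set 'rV[R]_n -> \bar R) : (0 <= dLP eta mu)%E.
Proof.
by apply: le_ereal_inf_tmp => _ [e [e0 _] <-]; rewrite lee_fin ltW.
Qed.

Lemma dH_ge0 k (A B : (T -> R) -> (T -> R)) : (0 <= dH (S_k P k A) (S_k P k B))%E.
Proof.
rewrite /dH le_max; apply/orP; left.
apply: ereal_sup_ge.
exists (ereal_inf [set dLP (law P (joint_map A (fun _ _ => 0))) mu | mu in S_k P k B]).
  exists (law P (joint_map A (fun _ _ => 0))) => //.
  by exists (fun _ _ => 0) => // i; exact: unit0.
by apply: le_ereal_inf_tmp => _ [mu _ <-]; exact: dLP_ge0.
Qed.

Lemma dH_bound k (A B : (T -> R) -> (T -> R)) :
  P_operator P A -> P_operator P B -> (0 < k)%N ->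
  (dH (S_k P k A) (S_k P k B) <=
    (k%:R * Num.sqrt (fine (opnorm P (fun v x => A v x - B v x))))%:E)%E.
Proof.
move=> PA PB k0; rewrite /dH ge_max; apply/andP; split;
  apply: ge_ereal_sup => _ [_ [v hv <-] <-].
- apply: ge_ereal_inf.
  exists (dLP (law P (joint_map A v)) (law P (joint_map B v))).
    by exists (law P (joint_map B v)) => //; exists v.
  exact: LP_bound.
- apply: ge_ereal_inf.
  exists (dLP (law P (joint_map A v)) (law P (joint_map B v))).
    by exists (law P (joint_map A v)) => //; exists v.
  exact: LP_bound.
Qed.

End Main2.

Lemma sum_k2k (R : realType) n :
  \sum_(1 <= k < n.+1) (k%:R / 2 ^+ k : R) + n.+2%:R / 2 ^+ n = 2.
Proof.
elim: n => [|n ih]; first by rewrite big_geq // add0r expr0 divr1.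
rewrite big_nat_recr //= -[in RHS]ih -!addrA; congr (_ + _).
have hX : (2 ^+ n : R) != 0 by rewrite expf_neq0.
rewrite exprS.
rewrite -[n.+3]addn3 -[n.+2]addn2 -[n.+1]addn1 !natrD.
set X := (2 ^+ n : R) in hX *.
by field.
Qed.

Lemma sum_k2k_le (R : realType) n :
  \sum_(1 <= k < n) (k%:R / 2 ^+ k : R) <= 2.
Proof.
case: n => [|n]; first by rewrite big_geq.
rewrite -[X in _ <= X](sum_k2k R n) lerDl.
by apply: divr_ge0; [exact: ler0n | exact: exprn_ge0].
Qed.

Unset Implicit Arguments.

Theorem lemma2p15 (d : measure_display) (T : measurableType d) (R : realType)
    (P : probability T R) (A B : (T -> R) -> (T -> R)) :
  P_operator P A -> P_operator P B ->
  (dM P A B <= (3 * Num.sqrt (fine (opnorm P (fun v x => A v x - B v x))))%:E)%E.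
Proof.
move=> PA PB.
set s := Num.sqrt _.
have s0 : 0 <= s by apply: sqrtr_ge0.
rewrite /dM; apply: lime_le.
  apply: is_cvg_nneseries => k _ _; apply: mule_ge0; last exact: dH_ge0.
  by rewrite lee_fin invr_ge0 exprn_ge0.
apply: nearW => n.
rewrite big_nat_cond.
apply: (@le_trans _ _ (\sum_(1 <= k < n | (1 <= k < n)%N && true)
    ((k%:R / 2 ^+ k) * s)%:E)%E).
  apply: lee_sum => k /andP[/andP[k1 _] _].
  rewrite mulrAC mulrC EFinM; apply: lee_wpmul2l.
    by rewrite lee_fin invr_ge0 exprn_ge0.
  exact: dH_bound.
rewrite -big_nat_cond sumEFin lee_fin -mulr_suml.
have := sum_k2k_le R n; nra.
Qed.
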